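(* Let $q\ge 2$, $n\ge 1$, $h\in F(n,q)$ and $k=\kappa^{\min}(h)$. Then $\Omega(h)+k\le \mathcal{L}^*(h)$.
   Context: Let $q\ge 2$, $A=\{0,1,\dots,q-1\}$, $[n]=\{1,\dots,n\}$, and let $F(n,q)$ be the set of all maps $A^n\to A^n$. For $f\in F(m,q)$ and $i\in[m]$, $f_i$ is the $i$-th coordinate function and $f^i(x)=(x_1,\dots,x_{i-1},f_i(x),x_{i+1},\dots,x_m)$; for a word $w=(w_1,\dots,w_t)$ over $[m]$, $f^w=f^{w_t}\circ\cdots\circ f^{w_1}$. $\Pi([m])$ is the set of permutations of $[m]$ written as words $(w_1,\dots,w_m)$. $\mathrm{pr}_{[n]}:A^m\to A^n$ is the projection onto the first $n$ coordinates. For $m\ge n$, $(f,w)$ with $f\in F(m,q)$, $w\in\Pi([m])$ sequentializes $h\in F(n,q)$ if $\mathrm{pr}_{[n]}\circ f^w=h\circ\mathrm{pr}_{[n]}$. $\kappa^{\min}(h)$ is the smallest $k\ge 0$ such that there exist $f\in F(n+k,q)$ and $w\in\Pi([n+k])$ with $(f,w)$ sequentializing $h$. A coordinate function $h_i$ is trivial if $h_i(x)=x_i$ for all $x$; $\Omega(h)$ is the number of $i\in[n]$ such that $h_i$ is not trivial. $F^*(m,q)$ is the set of $g\in F(m,q)$ that update at most one coordinate, i.e. there is $i\in[m]$ with $g_j(x)=x_j$ for all $j\ne i$ and all $x\in A^m$. For $m\ge n$, $\mathcal{L}(h\,|\,m)$ is the smallest $t\ge 0$ such that there exist $g^{(1)},\dots,g^{(t)}\in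 F^*(m,q)$ with $\mathrm{pr}_{[n]}\circ g^{(t)}\circ\cdots\circ g^{(1)}=h\circ\mathrm{pr}_{[n]}$, and $\mathcal{L}^*(h)=\min\{\mathcal{L}(h\,|\,m): m\ge n\}$. *)

(* Defs.v *)
From mathcomp Require Import all_boot.
From Stdlib Require Lists.List.
Set Implicit Arguments. Unset Strict Implicit. Unset Printing Implicit Defensive.

(* A = {0,...,q-1} is 'I_q; coordinates [m] = {1..m} are 'I_m (0-based);
   a point of A^m is a finite function 'I_m -> 'I_q. *)
Definition vec (q m : nat) := {ffun 'I_m -> 'I_q}.

Definition Fmap (m q : nat) := vec q m -> vec q m.

Definition upd (q m : nat) (f : Fmap m q) (i : 'I_m) (x : vec q m) : vec q m :=
  [ffun j => if j == i then f x i else x j].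

(* f^w = f^{w_t} o ... o f^{w_1} : apply w_1 first *)
Definition seqf (q m : nat) (f : Fmap m q) (w : seq 'I_m) (x : vec q m) : vec q m :=
  foldl (fun y i => upd f i y) x w.

Definition is_perm_word (m : nat) (w : seq 'I_m) : bool := perm_eq w (enum 'I_m).

Definition pr (q n k : nat) (x : vec q (n + k)) : vec q n :=
  [ffun i => x (lshift k i)].

Definition sequentializes (q n k : nat) (f : Fmap (n + k) q) (w : seq 'I_(n + k))
  (h : Fmap n q) : Prop :=
  is_perm_word w /\ forall x : vec q (n + k), pr (seqf f w x) = h (pr x).

Definition seq_possible (q n : nat) (h : Fmap n q) (k : nat) : Prop :=
  exists (f : Fmap (n + k) q) (w : seq 'I_(n + k)), sequentializes f w h.

Definition is_kappa_min (q n : nat) (h : Fmap n q) (k : nat) : Prop :=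
  seq_possible h k /\ forall k', seq_possible h k' -> k <= k'.

Definition trivial_coord (q n : nat) (h : Fmap n q) (i : 'I_n) : bool :=
  [forall x : vec q n, h x i == x i].

Definition Omega (q n : nat) (h : Fmap n q) : nat :=
  #|[pred i : 'I_n | ~~ trivial_coord h i]|.

Definition single_update (q m : nat) (g : Fmap m q) : Prop :=
  exists i : 'I_m, forall (j : 'I_m) (x : vec q m), j != i -> g x j = x j.

(* g^(t) o ... o g^(1) applied to x, with gs = [:: g^(1); ...; g^(t)] *)
Definition compose_list (q m : nat) (gs : seq (Fmap m q)) (x : vec q m) : vec q m :=
  foldl (fun y g => g y) x gs.

Definition L_realizes (q n : nat) (h : Fmap n q) (k t : nat) : Prop :=
  exists gs : seq (Fmap (n + k) q),
    size gs = t /\ (forall g, Stdlib.Lists.List.In g gs -> single_update g) /\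
    forall x : vec q (n + k), pr (compose_list gs x) = h (pr x).

Definition is_L (q n : nat) (h : Fmap n q) (k t : nat) : Prop :=
  L_realizes h k t /\ forall t', L_realizes h k t' -> t <= t'.

(* t = L^*(h) = min over m >= n (m = n+k) of L(h|m) *)
Definition is_Lstar (q n : nat) (h : Fmap n q) (t : nat) : Prop :=
  (exists k, is_L h k t) /\ forall k t', is_L h k t' -> t <= t'.

(* Main.v *)
Require Import Defs.
From mathcomp Require Import all_boot.
Set Implicit Arguments. Unset Strict Implicit. Unset Printing Implicit Defensive.

Lemma cardc (T : finType) (A : pred T) : #|A| = count A (enum T).
Proof. by rewrite enumT cardE /enum_mem size_filter. Qed.

Definition stp (q m : nat) (z : vec q m) (p : 'I_m * (vec q m -> 'I_q)) : vec q m :=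
  [ffun c => if c == p.1 then p.2 z else z c].

Lemma normalize (q m : nat) (gs : seq (Fmap m q)) :
  (forall g, Stdlib.Lists.List.In g gs -> single_update g) ->
  exists ps : seq ('I_m * (vec q m -> 'I_q)),
    size ps = size gs /\ forall x, compose_list gs x = foldl (@stp q m) x ps.
Proof.
elim: gs => [|g gs IH] H; first by exists [::].
have [i Hi] := H g (or_introl erefl).
have [ps [Hs Hc]] := IH (fun g' Hg' => H g' (or_intror Hg')).
exists ((i, fun z => g z i) :: ps); split; first by rewrite /= Hs.
move=> x /=; rewrite /compose_list /= -/(compose_list gs (g x)) Hc.
congr foldl; apply/ffunP => c; rewrite ffunE /=.
by case: eqP => [->//|/eqP ne]; rewrite Hi.
Qed.

Section Build.
Variables (q n k0 : nat) (h : Fmap n q).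
Hypotheses (hq : 0 < q) (hn : 0 < n).
Variable ps : seq ('I_(n + k0) * (vec q (n + k0) -> 'I_q)).
Hypothesis Hps : forall x, pr (foldl (@stp q (n + k0)) x ps) = h (pr x).

Let m := n + k0.
Let c0 : 'I_q := Ordinal hq.
Let i0 : 'I_n := Ordinal hn.
Let dp : 'I_m * (vec q m -> 'I_q) := (lshift k0 i0, fun _ => c0).
Let t := size ps.
Let rg j : 'I_m := (nth dp ps j).1.
Let phi j := (nth dp ps j).2.
Let final j : bool := (rg j < n) && all (fun j' => rg j' != rg j) (iota j.+1 (t - j.+1)).
Let nf j := ~~ final j.
Let cnt p := count nf (iota 0 p).
Let k' := cnt t.
Let M := n + k'.
Let d1 : 'I_M := lshift k' i0.
Let rhon j := if final j then val (rg j) else n + cnt j.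
Let rho j : 'I_M := insubd d1 (rhon j).

Lemma cnt_split j p : j <= p -> cnt p = cnt j + count nf (iota j (p - j)).
Proof. by move=> le; rewrite /cnt -count_cat -iotaD subnKC. Qed.

Lemma cntS j : cnt j.+1 = cnt j + nf j.
Proof. by rewrite (cnt_split (leqnSn j)) subSnn /= addn0. Qed.

Lemma cnt_mono j p : j <= p -> cnt j <= cnt p.
Proof. by move=> le; rewrite (cnt_split le) leq_addr. Qed.

Lemma rhon_lt j : j < t -> rhon j < M.
Proof.
move=> jt; rewrite /rhon /M; case: ifP => [/andP [lt _]|nfj].
  exact: leq_trans lt (leq_addr _ _).
rewrite ltn_add2l /k'; apply: leq_trans (cnt_mono jt).
by rewrite cntS /nf nfj addn1.
Qed.

Lemma val_rho j : j < t -> val (rho j) = rhon j.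
Proof. by move=> jt; rewrite /rho val_insubd rhon_lt. Qed.

Lemma rhon_inj j j' : j < t -> j' < t -> rhon j = rhon j' -> j = j'.
Proof.
wlog le : j j' / j <= j'.
  move=> W jt j't e; case: (leqP j j') => [le|lt]; first exact: W.
  by apply/esym/W => //; apply: ltnW.
move=> jt j't; rewrite leq_eqVlt in le; case/orP: le => [/eqP//|lt].
rewrite /rhon; case: ifP => [/andP [ltn /allP Hall]|nfj]; case: ifP => [/andP [ltn' _]|nfj'].
- move=> /val_inj e; have := Hall j'; rewrite mem_iota lt /= subnKC // => /(_ j't).
  by rewrite e eqxx.
- by move=> e; move: ltn; rewrite e ltnNge leq_addr.
- by move=> e; move: ltn'; rewrite -e ltnNge leq_addr.
- move/eqP; rewrite eqn_add2l => /eqP e.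
  have := cnt_mono lt; rewrite cntS /nf nfj addn1 e ltnn //.
Qed.

Lemma rho_inj j j' : j < t -> j' < t -> rho j = rho j' -> j = j'.
Proof. by move=> jt j't e; apply: rhon_inj => //; rewrite -!val_rho // e. Qed.


Fixpoint loc p (r : 'I_m) : option 'I_M :=
  match p with
  | 0 => if val r < n then Some (insubd d1 (val r)) else None
  | p'.+1 => if r == rg p' then Some (rho p') else loc p' r
  end.

Let eps p r (y : vec q M) : 'I_q := if loc p r is Some c then y c else c0.
Let Env p y : vec q m := [ffun r => eps p r y].
Let F j y := phi j (Env j y).
Let fnew : Fmap M q := fun y =>
  [ffun c => if [pick j : 'I_t | rho j == c] is Some j then F j y else y c].
Let Z x p := foldl (@stp q m) x (take p ps).
Let Y y p := foldl (fun y c => upd fnew c y) y (map rho (iota 0 p)).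

Lemma loc_inv p r c : loc p r = Some c ->
  (exists2 j, j < p & c = rho j) \/
  (val r < n /\ c = insubd d1 (val r) /\ forall j, j < p -> rg j != r).
Proof.
elim: p c => [|p IH] c /=.
  by case: ifP => // lt [<-]; right.
case: eqP => [-> [<-]|/eqP ne /IH [[j jp ->]|[lt [-> H]]]].
- by left; exists p.
- by left; exists j => //; apply: ltnW.
- right; do 2!split => //; move=> j; rewrite ltnS leq_eqVlt => /orP [/eqP ->|]; last exact: H.
  by rewrite eq_sym.
Qed.

Lemma Zs x p : p < t -> Z x p.+1 = stp (Z x p) (nth dp ps p).
Proof. by move=> pt; rewrite /Z (take_nth dp pt) foldl_rcons. Qed.

Lemma Ys y p : Y y p.+1 = upd fnew (rho p) (Y y p).
Proof. by rewrite /Y -addn1 iotaD map_cat foldl_cat. Qed.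

Lemma fnew_rho y p : p < t -> fnew y (rho p) = F p y.
Proof.
move=> pt; rewrite /fnew ffunE; case: pickP => [j /eqP e|/(_ (Ordinal pt))].
  by rewrite (rho_inj (ltn_ord j) pt e).
by rewrite eqxx.
Qed.

Lemma sim y p : p <= t -> Env p (Y y p) = Z (Env 0 y) p.
Proof.
elim: p => [|p IH] pt. rewrite /Z take0 /Y /=. reflexivity. 
have pt' : p < t by exact pt. 
rewrite (Zs _ pt') -(IH (ltnW pt')) Ys. apply/ffunP => r.
rewrite /Env /stp !ffunE /eps /= -/(rg p) -/(phi p).
case: eqP => [er|/eqP ne].
  rewrite /upd ffunE eqxx (fnew_rho _ pt') /F /Env /eps. reflexivity.
case E: (loc p r) => [c|]; last reflexivity.
rewrite /upd ffunE; case: eqP => [ec|_]; last reflexivity.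
exfalso.
move: E; rewrite ec => /loc_inv [[j jp /rho_inj]|[lt [e H]]].
  by move=> /(_ pt' (ltn_trans jp pt')) ej; move: jp; rewrite ej ltnn.
have : val (rho p) = val r by rewrite e val_insubd (leq_trans lt (leq_addr _ _)).
rewrite val_rho // /rhon; case: ifP => [_ /val_inj|_ er]; first by move=> e'; move: ne; rewrite e' eqxx.
by move: lt; rewrite -er ltnNge leq_addr.
Qed.

Lemma loc_last p j R : j < p -> rg j = R ->
  (forall j', j < j' -> j' < p -> rg j' != R) -> loc p R = Some (rho j).
Proof.
elim: p => [//|p IH] jp eR H /=.
rewrite ltnS leq_eqVlt in jp; case/orP: jp => [/eqP ej|jp].
  by rewrite -ej eR eqxx.
have ne : R != rg p by rewrite eq_sym; apply: H.
rewrite (negbTE ne); apply: IH => // j' a b; apply: H => //; exact: ltnW.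
Qed.

Lemma loc_unw p R : (forall j, j < p -> rg j != R) -> loc p R = loc 0 R.
Proof.
elim: p => [//|p IH] H /=.
have ne : R != rg p by rewrite eq_sym; apply: H.
rewrite (negbTE ne); apply: IH => j jp; apply: H; exact: ltnW.
Qed.

Lemma Z_unw x p R : p <= t -> (forall j, j < p -> rg j != R) -> Z x p R = x R.
Proof.
elim: p => [|p IH] pt H; first by rewrite /Z take0.
rewrite (Zs _ pt) /stp ffunE -/(rg p).
have ne : R != rg p by rewrite eq_sym; apply: H.
rewrite (negbTE ne); apply: IH; first exact: ltnW.
move=> j jp; apply: H; exact: ltnW.
Qed.

Lemma last_write j R : j < t -> rg j = R ->
  exists jl, [/\ jl < t, rg jl = R & forall j', jl < j' -> j' < t -> rg j' != R].
Proof.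
have [d Hd] : exists d, t - j <= d by exists (t - j).
elim: d j Hd => [|d IH] j Hd jt eR.
  by move: Hd; rewrite leqn0 subn_eq0 leqNgt jt.
case: (boolP (has (fun j' => rg j' == R) (iota j.+1 (t - j.+1)))).
  case/hasP => j'; rewrite mem_iota subnKC // => /andP [a b] /eqP e.
  apply: (IH j') => //; rewrite -ltnS; apply: leq_trans Hd.
  by rewrite ltn_sub2l.
move/hasPn => H; exists j; split => // j' a b; apply: H.
by rewrite mem_iota a subnKC.
Qed.

Lemma fnew_out y c : c \notin map rho (iota 0 t) -> upd fnew c y = y.
Proof.
move=> nc; apply/ffunP => c'; rewrite /upd ffunE.
case: eqP => [->|_]; last reflexivity.
rewrite /fnew ffunE; case: pickP => [j /eqP e|_]; last reflexivity.
by move: nc; rewrite -e map_f // mem_iota /=.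
Qed.

Let rest := [seq c <- enum 'I_M | c \notin map rho (iota 0 t)].
Let wnew := map rho (iota 0 t) ++ rest.

Lemma wnew_perm : is_perm_word wnew.
Proof.
rewrite /is_perm_word; apply: uniq_perm.
- rewrite cat_uniq filter_uniq ?enum_uniq // andbT; apply/andP; split.
    rewrite map_inj_in_uniq ?iota_uniq // => a b; rewrite !mem_iota /= => ha hb.
    exact: rho_inj.
  by apply/hasPn => c; rewrite mem_filter => /andP [].
- exact: enum_uniq.
- move=> c; rewrite mem_enum mem_cat mem_filter mem_enum andbT.
  by case: (c \in _).
Qed.

Lemma seqf_wnew y : seqf fnew wnew y = Y y t.
Proof.
rewrite /seqf /wnew foldl_cat -/(Y y t).
have : all (fun c => c \notin map rho (iota 0 t)) rest by apply/allP => c; rewrite mem_filter => /andP [].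
elim: rest (Y y t) => [//|c s IH] z /= /andP [nc H].
by rewrite fnew_out // IH.
Qed.


Lemma insubd_lt (N : nat) (d : 'I_N) (a : nat) (ha : a < N) : val (insubd d a) = a.
Proof. by rewrite val_insubd ha. Qed.

Lemma loc_final (i : 'I_n) : loc t (lshift k0 i) = Some (lshift k' i).
Proof.
have iM : (i : nat) < M by exact: leq_trans (ltn_ord i) (leq_addr _ _).
case: (boolP (has (fun j => rg j == lshift k0 i) (iota 0 t))).
  case/hasP => j; rewrite mem_iota /= => jt /eqP e.
  have [jl [jlt eR H]] := last_write jt e.
  rewrite (loc_last (p := t) jlt eR H); congr Some; apply: val_inj.
  rewrite val_rho // /rhon /final eR /= ltn_ord /=.
  have -> : all (fun j' => rg j' != lshift k0 i) (iota jl.+1 (t - jl.+1)).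
    apply/allP => j'; rewrite mem_iota subnKC // => /andP [a b]; exact: H.
  by [].
move/hasPn => H; rewrite loc_unw /=.
  by rewrite ltn_ord; congr Some; apply: val_inj; rewrite insubd_lt.
by move=> j jt; apply: H; rewrite mem_iota.
Qed.

Lemma seq_ok : sequentializes fnew wnew h.
Proof.
split; first exact: wnew_perm.
move=> y; rewrite seqf_wnew.
have px : pr (Env 0 y) = pr y.
  apply/ffunP => i; rewrite !ffunE /eps /= ltn_ord; congr (y _).
  by apply: val_inj; rewrite insubd_lt //; exact: leq_trans (ltn_ord i) (leq_addr _ _).
rewrite -px -Hps.
have -> : foldl (@stp q (n + k0)) (Env 0 y) ps = Z (Env 0 y) t by rewrite /Z take_size.
rewrite -(sim y (leqnn t)); apply/ffunP => i; rewrite !ffunE /eps loc_final.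
reflexivity.
Qed.

Lemma written (i : 'I_n) : ~~ trivial_coord h i ->
  has (fun j => rg j == lshift k0 i) (iota 0 t).
Proof.
apply: contraR => /hasPn H; apply/forallP => x; apply/eqP.
pose x0 : vec q m := [ffun c : 'I_m => x (insubd i0 (val c))].
have px : pr x0 = x.
  apply/ffunP => i'; rewrite !ffunE; congr (x _); apply: val_inj.
  by rewrite insubd_lt /=; last exact: ltn_ord.
rewrite -{1}px -Hps.
have -> : foldl (@stp q (n + k0)) x0 ps = Z x0 t by rewrite /Z take_size.
rewrite ffunE Z_unw //.
  rewrite ffunE; congr (x _); apply: val_inj; rewrite insubd_lt /=; [by [] | exact: ltn_ord].
by move=> j jt; apply: H; rewrite mem_iota.
Qed.

Lemma count_ok : Omega h + k' <= t.
Proof.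
have Ht : count final (iota 0 t) + k' = t.
  by rewrite /k' /cnt -[X in _ = X](size_iota 0 t) -(count_predC final).
rewrite -[X in _ <= X]Ht leq_add2r.
pose g (j : 'I_t) : 'I_n := insubd i0 (val (rg j)).
apply: (@leq_trans #|[set g j | j in [pred j : 'I_t | final j]]|).
  apply: subset_leq_card; apply/subsetP => i; rewrite inE => nt.
  have /hasP [j] := written nt; rewrite mem_iota /= => jt /eqP e.
  have [jl [jlt eR H]] := last_write jt e.
  apply/imsetP; exists (Ordinal jlt).
    rewrite inE /= /final eR /= ltn_ord /=.
    apply/allP => j'; rewrite mem_iota subnKC // => /andP [a b]; exact: H.
  by apply: val_inj; rewrite /g /= eR insubd_lt /=.
apply: leq_trans (leq_imset_card _ _) _.
by rewrite cardc -val_enum_ord count_map.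
Qed.


Lemma construct : exists kk, seq_possible h kk /\ Omega h + kk <= size ps.
Proof. exists k'; split; [exists fnew, wnew; exact: seq_ok | exact: count_ok]. Qed.

End Build.

Theorem mainTheorem9 (q n : nat) (h : Fmap n q) (k Lstar : nat) :
  2 <= q -> 1 <= n ->
  is_kappa_min h k -> is_Lstar h Lstar ->
  Omega h + k <= Lstar.
Proof.
move=> q2 n1 [_ Hk] [[k0 [[gs [Hsz [Hsu Hgs]]] _]] _].
have [ps [Hs Hc]] := normalize Hsu.
have hq : 0 < q by exact: ltn_trans q2.
have Hps : forall x, pr (foldl (@stp q (n + k0)) x ps) = h (pr x).
  by move=> x; rewrite -Hc.
have [kk [Hp Hle]] := construct hq n1 Hps.
rewrite -Hsz -Hs; apply: leq_trans Hle; rewrite leq_add2l; exact: Hk.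
Qed.
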